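(* Let $w\in\Sigma^*$ and suppose the bigram graph $G(w)$ has a removable node $r\in\Sigma$. Let $w'=P_r(w)$ be the string obtained from $w$ by deleting all occurrences of the letter $r$. Then $w\in L_{\mathrm{OBST}}$ if and only if $w'\in L_{\mathrm{OBST}}$.
   Context: Let $\Sigma$ be a finite alphabet and $\$\notin\Sigma$; $\Sigma_\$=\Sigma\cup\{\$\}$. The bigram graph $G(w)$ of $w\in\Sigma^*$ is the weighted directed graph on vertex set $\Sigma_\$$ in which the weight $e(u,v)\ge0$ of the edge $(u,v)$ is the number of times $u$ occurs immediately before $v$ in the string $\$w\$$. For $v$ a vertex, $\mathrm{outflow}(v)=\sum_{u\neq v}e(v,u)$. If $e(u,v)>0$ we say $u$ is a parent of $v$ and $v$ is a child of $u$. A vertex $x\neq\$$ is removable in $G(w)$ if: (a) $x$ has exactly one child $b$ other than $x$ itself; (b) no parent of $x$ other than $x$ itself has $b$ as a child; and (c) if $e(x,x)>0$ then $\mathrm{outflow}(x)=1$. For $x\in\Sigma$ write $\Sigma_{\neg x}=\Sigma\setminus\{x\}$. For $x\in\Sigma$ and $a,b\in\Sigma_{\neg x}$ (with $a=b$ allowed) define $I_{x,a,b}=\Sigma^*\,a\,x\,\Sigma_{\neg a}^*\,b\,\Sigma^*$, $J_{x,a,b}=\Sigma^*\,a\,\Sigma_{\neg x}^*\,b\,\Sigma^*$ (regular-expression notation), $K_{x,a,b}=I_{x,a,b}\cap J_{x,a,b}$, and $L_{\mathrm{OBST}}=\bigcup_{x\in\Sigma}\bigcup_{a,b\in\Sigma_{\neg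 x}}K_{x,a,b}$. *)

(* Defs.v *)
From mathcomp Require Import all_boot.
Set Implicit Arguments. Unset Strict Implicit. Unset Printing Implicit Defensive.

Section Bigram.
Variable T : finType.

(* Vertices of the bigram graph: Sigma_$ = option T, with None = $. *)
Definition vtx := option T.
Definition dollar : vtx := None.

Definition padded (w : seq T) : seq vtx := dollar :: rcons (map Some w) dollar.

Definition edge (w : seq T) (u v : vtx) : nat :=
  let s := padded w in count (pred1 (u, v)) (zip s (behead s)).

Definition outflow (w : seq T) (v : vtx) : nat :=
  \sum_(u : vtx | u != v) edge w v u.

Definition removable (w : seq T) (x : T) : Prop :=
  exists b : vtx,
    [/\
        b != Some x, 0 < edge w (Some x) b,
        (forall c : vtx, c != Some x -> 0 < edge w (Some x) c -> c = b),
        (forall u : vtx, u != Some x -> 0 < edge w u (Some x) -> edge w u b = 0) &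
        (0 < edge w (Some x) (Some x) -> outflow w (Some x) = 1)].

Definition inI (x a b : T) (w : seq T) : Prop :=
  exists p m q : seq T, w = p ++ [:: a; x] ++ m ++ b :: q /\ all (fun c => c != a) m.

Definition inJ (x a b : T) (w : seq T) : Prop :=
  exists p m q : seq T, w = p ++ a :: m ++ b :: q /\ all (fun c => c != x) m.

Definition inK (x a b : T) (w : seq T) : Prop := inI x a b w /\ inJ x a b w.

Definition inLOBST (w : seq T) : Prop :=
  exists x a b : T, [/\ a != x, b != x & inK x a b w].

Definition proj (r : T) (w : seq T) : seq T := filter (fun c => c != r) w.

End Bigram.

(* Main.v *)
Require Import Defs.
From mathcomp Require Import all_boot.
Set Implicit Arguments. Unset Strict Implicit. Unset Printing Implicit Defensive.

Section Aux.
Variable T : finType.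

Lemma first_split (x : T) s : x \in s -> exists s1 s2, s = s1 ++ x :: s2 /\ x \notin s1.
Proof.
elim: s => //= h t IH; rewrite in_cons; case: (eqVneq x h) => [->|ne] /= H.
  by exists [::], t.
have [s1 [s2 [-> n]]] := IH H. exists (h :: s1), s2; split => //.
by rewrite in_cons negb_or ne.
Qed.

Lemma last_split (x : T) s : x \in s -> exists s1 s2, s = s1 ++ x :: s2 /\ x \notin s2.
Proof.
elim: s => //= h t IH H.
case Ht: (x \in t).
  by have [s1 [s2 [-> n]]] := IH Ht; exists (h :: s1), s2.
move: H; rewrite in_cons Ht orbF => /eqP <-. by exists [::], t; rewrite Ht.
Qed.

Lemma all_neq (a : T) u : all (fun z => z != a) u = (a \notin u).
Proof. by elim: u => //= h t ->; rewrite in_cons negb_or eq_sym. Qed.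

Lemma minimize (P : pred T) (a b : T) w p m q :
  w = p ++ a :: m ++ b :: q -> all P m ->
  exists p' m' q', [/\ w = p' ++ a :: m' ++ b :: q', all P m', a \notin m' & b \notin m'].
Proof.
move=> Ew Hm.
have [m1 [q1 [Ew1 Hm1 Hb1]]] : exists m1 q1, [/\ w = p ++ a :: m1 ++ b :: q1, all P m1 & b \notin m1].
  case Hb: (b \in m).
    have [s1 [s2 [Em n]]] := first_split Hb.
    exists s1, (s2 ++ b :: q); split => //.
      by rewrite Ew Em -catA.
    by move: Hm; rewrite Em all_cat => /andP[].
  by exists m, q; rewrite Hb.
case Ha: (a \in m1).
  have [s1 [s2 [Em n]]] := last_split Ha.
  exists (p ++ a :: s1), s2, q1; split.
  - by rewrite Ew1 Em -!catA.
  - by move: Hm1; rewrite Em all_cat /= => /and3P[].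
  - by [].
  - by apply: contra Hb1; rewrite Em mem_cat in_cons => ->; rewrite !orbT.
by exists p, m1, q1; rewrite Ha.
Qed.

Lemma tail_uniq (y : T) l1 t1 l2 t2 :
  l1 ++ y :: t1 = l2 ++ y :: t2 -> y \notin t1 -> y \notin t2 -> t1 = t2.
Proof.
move=> E n1 n2.
have E' : rev t1 ++ y :: rev l1 = rev t2 ++ y :: rev l2.
  by have := congr1 rev E; rewrite !rev_cat !rev_cons -!cats1 -!catA.
rewrite -(revK t1) -(revK t2); congr rev.
rewrite -mem_rev in n1; rewrite -mem_rev in n2.
move: (rev t2) n2 E' {E}; elim: (rev t1) n1 => [|h t IH] n1 [|h2 t2'] n2 //= [].
- by move=> eh; move: n2; rewrite eh in_cons eqxx.
- by move=> eh; move: n1; rewrite -eh in_cons eqxx.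
- move=> -> E; rewrite (IH _ t2') //.
  + by move: n1; rewrite in_cons negb_or => /andP[].
  + by move: n2; rewrite in_cons negb_or => /andP[].
Qed.

Lemma mem_filter_proj (r y : T) l : y \in proj r l -> y \in l.
Proof. by rewrite mem_filter => /andP[]. Qed.
Lemma proj_cat (r : T) l1 l2 : proj r (l1 ++ l2) = proj r l1 ++ proj r l2.
Proof. exact: filter_cat. Qed.
Lemma proj_cons_ne (r y : T) l : y != r -> proj r (y :: l) = y :: proj r l.
Proof. by rewrite /proj /= => ->. Qed.
Lemma proj_cons_eq (r : T) l : proj r (r :: l) = proj r l.
Proof. by rewrite /proj /= eqxx. Qed.
Lemma proj_nseq (r : T) k : proj r (nseq k r) = [::].
Proof. by elim: k => //= k; rewrite /proj /= eqxx. Qed.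
Lemma all_proj (Q : pred T) r l : all Q l -> all Q (proj r l).
Proof. by move=> H; apply/allP => y /(@mem_filter_proj r)/(allP H). Qed.
Lemma mem_proj (r y : T) l : y \in proj r l -> y \in l.
Proof. by rewrite mem_filter => /andP[]. Qed.
Lemma mem_proj_ne (r y : T) l : y \in proj r l -> y != r.
Proof. by rewrite mem_filter => /andP[]. Qed.
Lemma all_unproj (Q : pred T) r l : all Q (proj r l) -> Q r -> all Q l.
Proof.
move=> H Qr; elim: l H => //= h t IH; rewrite /proj /=.
case: (eqVneq h r) => [->|ne] /=; first by move=> /IH ->; rewrite Qr.
by move=> /andP[-> /IH].
Qed.

Lemma lift_split (P : pred T) l s1 y s2 : filter P l = s1 ++ y :: s2 ->
  exists l1 l2, [/\ l = l1 ++ y :: l2, filter P l1 = s1 & filter P l2 = s2].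
Proof.
elim: l s1 => [|h t IH] s1 /=; first by case: s1.
case Ph: (P h).
  case: s1 => [|h1 s1] /= [<-] E.
    by exists [::], t; rewrite /= E.
  have [l1 [l2 [-> E1 E2]]] := IH _ E.
  by exists (h :: l1), l2; rewrite /= Ph E1.
move=> /IH [l1 [l2 [-> E1 E2]]].
by exists (h :: l1), l2; rewrite /= Ph E1.
Qed.

Lemma nseq_shift (r : T) k t : r :: nseq k r ++ t = nseq k r ++ r :: t.
Proof. by elim: k => //= k IH; rewrite IH. Qed.

Lemma run_split (r : T) l : exists k s, l = nseq k r ++ s /\
  (s = [::] \/ exists y s', s = y :: s' /\ y != r).
Proof.
elim: l => [|h t [k [s [E H]]]]; first by exists 0, [::]; split => //; left.
case: (eqVneq h r) => [->|ne].
  by exists k.+1, s; rewrite E.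
by exists 0, (h :: t); split => //; right; exists h, t.
Qed.

Lemma pairs_split (P : pred (option T * option T)) l1 u v l2 :
  P (u, v) + count P (zip (v :: l2) l2) <=
  count P (zip (l1 ++ u :: v :: l2) (behead (l1 ++ u :: v :: l2))).
Proof.
elim: l1 => [|h t IH] //=.
have [y [L E]] : exists y L, t ++ u :: v :: l2 = y :: L by case: t {IH} => [|z t]; eexists; eexists.
rewrite E /=; move: IH; rewrite E /= => IH.
exact: leq_trans IH (leq_addl _ _).
Qed.

Lemma padded_split w p (u v : T) q : w = p ++ u :: v :: q ->
  padded w = (None :: map Some p) ++ Some u :: Some v :: rcons (map Some q) None.
Proof. by move=> ->; rewrite /padded map_cat rcons_cat. Qed.

Lemma edge_pos w p (u v : T) q : w = p ++ u :: v :: q -> 0 < edge w (Some u) (Some v).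
Proof.
move=> /padded_split E; rewrite /edge; cbv zeta; rewrite E.
apply: leq_trans (pairs_split _ _ _ _ _); by rewrite /= eqxx.
Qed.

Lemma edge_pos_end w p (u : T) : w = rcons p u -> 0 < edge w (Some u) None.
Proof.
move=> E; rewrite /edge; cbv zeta.
have -> : padded w = (None :: map Some p) ++ Some u :: None :: [::].
  by rewrite E /padded map_rcons -!cats1 -!catA.
apply: leq_trans (pairs_split _ _ _ _ _); by rewrite /= eqxx.
Qed.

Lemma edge_ge2 w p p' (u v : T) q : w = p ++ u :: v :: (p' ++ u :: v :: q) ->
  1 < edge w (Some u) (Some v).
Proof.
move=> /padded_split E; rewrite /edge; cbv zeta; rewrite E map_cat rcons_cat /=.
apply: leq_trans (pairs_split _ (None :: map Some p) (Some u) (Some v) _); rewrite /= eqxx add1n ltnS.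
apply: leq_trans (pairs_split _ (Some v :: map Some p') (Some u) (Some v) _); by rewrite /= eqxx.
Qed.

Lemma outflow_ge w (u v : option T) : v != u -> edge w u v <= outflow w u.
Proof. by move=> H; rewrite /outflow (bigD1 v) //= leq_addr. Qed.

Lemma lift_proj (r : T) l s1 y s2 : proj r l = s1 ++ y :: s2 ->
  exists l1 l2, [/\ l = l1 ++ y :: l2, proj r l1 = s1 & proj r l2 = s2].
Proof. exact: lift_split. Qed.

End Aux.
Section Main.
Variables (T : finType) (w : seq T) (r : T) (bb : option T).
Hypotheses (Hbr : bb != Some r) (Hpos : 0 < edge w (Some r) bb)
  (Huniq : forall c, c != Some r -> 0 < edge w (Some r) c -> c = bb)
  (Hpar : forall u, u != Some r -> 0 < edge w u (Some r) -> edge w u bb = 0)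
  (Hloop : 0 < edge w (Some r) (Some r) -> outflow w (Some r) = 1).

Lemma F1 p (y : T) q : w = p ++ r :: y :: q -> y != r -> bb = Some y.
Proof. by move=> E ny; apply/esym; apply: Huniq => //; apply: edge_pos E. Qed.

Lemma F2 p : w = p ++ [:: r] -> bb = None.
Proof. by move=> E; apply/esym; apply: Huniq => //; apply: (@edge_pos_end _ _ p); rewrite E cats1. Qed.

Lemma F3 p (u : T) q p' c q' : w = p ++ u :: r :: q -> u != r -> bb = Some c ->
  w = p' ++ u :: c :: q' -> False.
Proof.
move=> E ur Ec E'.
have := Hpar (u := Some u) ur (edge_pos E).
by rewrite Ec; move: (edge_pos E') => /[swap] ->.
Qed.

Lemma after_r p l : w = p ++ r :: l ->
  (exists k, l = nseq k r /\ bb = None) \/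
  (exists k y s, [/\ l = nseq k r ++ y :: s, y != r, bb = Some y & proj r l = y :: proj r s]).
Proof.
move=> E; have [k [s [El Hs]]] := run_split r l.
case: Hs => [Es|[y [s' [Es ny]]]]; subst s.
  left; exists k; rewrite cats0 in El; split => //.
  by apply: (@F2 (p ++ nseq k r)); rewrite E El -catA -nseq_shift cats0.
right; exists k, y, s'; split => //.
  by apply: (@F1 (p ++ nseq k r) _ s') => //; rewrite E El -catA -nseq_shift.
by rewrite El proj_cat proj_nseq proj_cons_ne.
Qed.


Lemma bwd : inLOBST (proj r w) -> inLOBST w.
Proof.
case=> x [a [b [ax bx [[p [m [q [Ew Hm]]]] [p2 [m2 [q2 [Ew2 Hm2]]]]]]]].
rewrite /= in Ew.
have ar : a != r by apply: (@mem_proj_ne _ r a w); rewrite Ew mem_cat in_cons eqxx orbT.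
have xr : x != r by apply: (@mem_proj_ne _ r x w); rewrite Ew mem_cat !in_cons eqxx !orbT.
have br : b != r.
  by apply: (@mem_proj_ne _ r b w); rewrite Ew2 mem_cat in_cons mem_cat in_cons eqxx !orbT.
have [w1 [w2 [Ew' P1 P2]]] := lift_proj Ew2.
have [w3 [w4 [Ew2' P3 P4]]] := lift_proj P2.
have Hw3 : all (fun c => c != x) w3.
  by apply: (@all_unproj _ _ r); [rewrite P3 | rewrite eq_sym].
have [v1 [v2 [Ev P5 P6]]] := lift_proj Ew.
have [z [v3 [Ev2 P7 P8]]] := @lift_proj _ r v2 [::] x _ P6.
have [v4 [v5 [Ev3 P9 P10]]] := lift_proj P8.
have Hv4 : all (fun c => c != a) v4.
  by apply: (@all_unproj _ _ r); [rewrite P9 | rewrite eq_sym].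
case: z Ev2 P7 => [|z0 z'] Ev2 P7.
  exists x, a, b; split => //; split.
  - by exists v1, v4, v5; split => //; rewrite Ev Ev2 Ev3.
  - by exists w1, w3, w4; split => //; rewrite Ew' Ew2'.
case: (eqVneq z0 r) P7 => [ez0|ne] P7; last by move: P7; rewrite proj_cons_ne.
subst z0; rewrite proj_cons_eq in P7.
have Ew3 : w = (v1 ++ [:: a]) ++ r :: (z' ++ x :: v3) by rewrite Ev Ev2 -catA.
have bbx : bb = Some x.
  case: (after_r Ew3) => [[k [Ek _]]|[k [y [s [Ek yr By Pl]]]]].
    by have := mem_nseq k r x; rewrite -Ek mem_cat in_cons eqxx orbT (negbTE xr) andbF.
  by move: Pl; rewrite proj_cat P7 proj_cons_ne //= => -[->].
exists r, a, b; split => //; split.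
- exists v1, (z' ++ x :: v4), v5; split.
    by rewrite Ev Ev2 Ev3 /= -catA.
  apply: (@all_unproj _ _ r); last by rewrite /= eq_sym.
  by rewrite proj_cat P7 proj_cons_ne // P9 /= eq_sym ax.
- exists w1, w3, w4; split; first by rewrite Ew' Ew2'.
  rewrite all_neq; apply/negP => rw3.
  have [t1 [t2 [Et _]]] := first_split rw3.
  have Ew4 : w = (w1 ++ a :: t1) ++ r :: (t2 ++ b :: w4) by rewrite Ew' Ew2' Et -!catA.
  case: (after_r Ew4) => [[k [Ek _]]|[k [y [s [Ek yr By Pl]]]]].
    by have := mem_nseq k r b; rewrite -Ek mem_cat in_cons eqxx orbT (negbTE br) andbF.
  move: By Pl; rewrite bbx => -[<-] {y yr Ek}.
  rewrite proj_cat proj_cons_ne //.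
  case Et2: (proj r t2) => [|h t'] /= [eh _].
    by move: bx; rewrite eh eqxx.
  have : x \in w3.
    rewrite Et mem_cat in_cons; apply/orP; right; apply/orP; right.
    by apply: (mem_proj (r:=r)); rewrite Et2 eh mem_head.
  by move: Hw3; rewrite all_neq => /negPf ->.
Qed.


Lemma fwd : inLOBST w -> inLOBST (proj r w).
Proof.
case=> x [a [b [ax bx [[p [m [q [Ew Hm]]]] [p2 [m2 [q2 [Ew2 Hm2]]]]]]]].
rewrite /= in Ew.
case: (eqVneq a r) => [ear|nar].
  subst a.
  have xr : x != r by rewrite eq_sym.
  have bbx := F1 Ew xr.
  have [p2' [m2' [q2' [Ew2' Hm2' nr nb]]]] := minimize Ew2 Hm2.
  case: m2' Ew2' Hm2' nr nb => [|y m3] Ew2' Hm2' nr nb; last first.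
    have yr : y != r by move: nr; rewrite in_cons negb_or eq_sym => /andP[].
    move: Hm2'; have := F1 Ew2' yr; rewrite bbx => -[->] /=.
    by rewrite eqxx.
  case: (eqVneq b r) => [ebr|nbr]; last first.
    by move: bx; have := F1 Ew2' nbr; rewrite bbx => -[->]; rewrite eqxx.
  subst b.
  have Hout := Hloop (@edge_pos _ w p2' r r q2' Ew2').
  have Ew' : w = (p ++ r :: x :: m) ++ r :: q by rewrite Ew -catA.
  case: (after_r Ew') => [[k [Ek Bn]]|[k [y [s [Ek yr By _]]]]].
    by rewrite Bn in bbx.
  move: By; rewrite bbx => -[ey]; subst y.
  have E2 : w = p ++ r :: x :: ((m ++ nseq k r) ++ r :: x :: s).
    by rewrite Ew Ek -catA -nseq_shift.
  have := leq_trans (edge_ge2 E2) (@outflow_ge _ w (Some r) (Some x) xr).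
  by rewrite Hout.
case: (eqVneq x r) => [exr|nxr].
  subst x.
  have br : b != r by [].
  have [p2' [m2' [q2' [Ew2' Hm2' na nb]]]] := minimize Ew2 Hm2.
  have Ew' : w = (p ++ [:: a]) ++ r :: (m ++ b :: q) by rewrite Ew -catA.
  case: (after_r Ew') => [[k [Ek _]]|[k [c [s [Ek cr Bc Pl]]]]].
    by have := mem_nseq k r b; rewrite -Ek mem_cat in_cons eqxx orbT (negbTE br) andbF.
  have Pw : proj r w = proj r p ++ a :: c :: proj r s.
    by rewrite Ew proj_cat proj_cons_ne // proj_cons_eq Pl.
  have NoAC : forall p' q', w = p' ++ a :: c :: q' -> False.
    by move=> p' q'; exact: F3 Ew nar Bc.
  case: (boolP (c \in m2' ++ [:: b])) => Hc.
    case: m2' Ew2' Hm2' na nb Hc => [|y m3] Ew2' Hm2' na nb Hc.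
      rewrite /= in_cons orbF in Hc.
      by exfalso; apply: (NoAC p2' q2'); rewrite Ew2' (eqP Hc).
    have ya : y != a by move: na; rewrite in_cons negb_or eq_sym => /andP[].
    have yr : y != r by move: Hm2' => /andP[].
    have yc : c != y.
      by apply/eqP => ecy; apply: (NoAC p2' (m3 ++ b :: q2')); rewrite Ew2' ecy.
    have [u1 [u2 [Eu na1]]] : exists u1 u2, w = p2' ++ a :: y :: u1 ++ c :: u2 /\ a \notin u1.
      case Hcm: (c \in m3).
        have [s1 [s2 [Es _]]] := first_split Hcm.
        exists s1, (s2 ++ b :: q2'); split; first by rewrite Ew2' Es /= -catA.
        by apply: contra na; rewrite Es !in_cons mem_cat => ->; rewrite !orbT.
      have ecb : c = b.
        by move: Hc; rewrite /= in_cons mem_cat Hcm (negbTE yc) /= in_cons orbF => /eqP.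
      exists m3, q2'; split; first by rewrite Ew2' ecb.
      by apply: contra na; rewrite in_cons => ->; rewrite orbT.
    exists y, a, c; split; [by rewrite eq_sym | by [] | split].
      exists (proj r p2'), (proj r u1), (proj r u2); split.
        by rewrite Eu proj_cat !proj_cons_ne // proj_cat proj_cons_ne.
      by apply: all_proj; rewrite all_neq.
    by exists (proj r p), [::], (proj r s); split.
  move: Hc; rewrite mem_cat negb_or in_cons orbF => /andP[cm2 cb].
  rewrite proj_cat proj_cons_ne // in Pl.
  case Epm: (proj r m) Pl => [|h t] /= [eh Pt].
    by move: cb; rewrite eh eqxx.
  subst h.
  have ca : c != a.
    by apply: (allP Hm); apply: (mem_proj (r:=r)); rewrite Epm mem_head.
  exists c, a, b; split; [by rewrite eq_sym | by rewrite eq_sym | split].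
    exists (proj r p), t, (proj r q); split.
      by rewrite Ew proj_cat proj_cons_ne // proj_cons_eq proj_cat proj_cons_ne // Epm.
    by move: (all_proj r Hm); rewrite Epm => /andP[].
  exists (proj r p2'), (proj r m2'), (proj r q2'); split.
    by rewrite Ew2' proj_cat proj_cons_ne // proj_cat proj_cons_ne.
  by apply: all_proj; rewrite all_neq.
case: (eqVneq b r) => [ebr|nbr]; last first.
  exists x, a, b; split => //; split.
    exists (proj r p), (proj r m), (proj r q); split; last exact: all_proj.
    by rewrite Ew proj_cat !proj_cons_ne // proj_cat proj_cons_ne.
  exists (proj r p2), (proj r m2), (proj r q2); split; last exact: all_proj.
  by rewrite Ew2 proj_cat proj_cons_ne // proj_cat proj_cons_ne.
subst b.
have [p2' [m2' [q2' [Ew2' Hm2' na nr]]]] := minimize Ew2 Hm2.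
have Ew2'' : w = (p2' ++ a :: m2') ++ r :: q2' by rewrite Ew2' -catA.
have Ew' : w = (p ++ a :: x :: m) ++ r :: q by rewrite Ew -catA.
case: (after_r Ew2'') => [[j [Ej Bn]]|[j [c [s2 [Ej cr Bc Pl2]]]]].
  case: (after_r Ew') => [[k [Ek _]]|[k [y [s [_ _ By _]]]]]; last by rewrite Bn in By.
  have E0 : p ++ a :: (x :: m ++ r :: q) = p2' ++ a :: (m2' ++ r :: q2').
    by rewrite -Ew -Ew2'.
  have := tail_uniq E0.
  have anm : a \notin m by rewrite -all_neq.
  rewrite Ek Ej !in_cons !mem_cat !in_cons !mem_nseq (negbTE ax) (negbTE nar) (negbTE anm).
  rewrite (negbTE na) !andbF /= => /(_ isT isT) Et.
  have : x \in m2' ++ r :: nseq j r by rewrite -Et mem_head.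
  rewrite mem_cat in_cons mem_nseq (negbTE nxr) andbF orbF.
  by move: Hm2'; rewrite all_neq => /negPf ->.
case: (after_r Ew') => [[k [Ek Bn]]|[k [c' [s [Ek c'r Bc' Pl]]]]]; first by rewrite Bn in Bc.
move: Bc'; rewrite Bc => -[ecc]; subst c'.
have Pw1 : proj r w = proj r p ++ a :: x :: proj r m ++ c :: proj r s.
  by rewrite Ew proj_cat proj_cons_ne // proj_cons_ne // proj_cat proj_cons_eq Pl.
have Pw2 : proj r w = proj r p2' ++ a :: proj r m2' ++ c :: proj r s2.
  by rewrite Ew2' proj_cat proj_cons_ne // proj_cat proj_cons_eq Pl2.
case: (eqVneq c x) => [ecx|ncx]; last first.
  exists x, a, c; split => //; split.
    by exists (proj r p), (proj r m), (proj r s); split; [|exact: all_proj].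
  by exists (proj r p2'), (proj r m2'), (proj r s2); split; [|exact: all_proj].
subst c.
case: m2' Ew2' Ew2'' Hm2' na nr Pw2 => [|y m3] Ew2' Ew2'' Hm2' na nr Pw2.
  by exfalso; apply: (F3 (p:=p2') (q:=q2') Ew2' nar Bc (p':=p) (q':=m ++ r :: q)).
have ya : y != a by move: na; rewrite in_cons negb_or eq_sym => /andP[].
have yr : y != r by move: nr; rewrite in_cons negb_or eq_sym => /andP[].
have yx : y != x by move: Hm2' => /andP[].
exists y, a, x; split; [by rewrite eq_sym | by rewrite eq_sym | split].
  exists (proj r p2'), (proj r m3), (proj r s2); split.
    by rewrite Pw2 proj_cons_ne.
  by apply: all_proj; rewrite all_neq; move: na; rewrite in_cons negb_or => /andP[].
by exists (proj r p), [::], (proj r m ++ x :: proj r s); split.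
Qed.

End Main.

Theorem lemma2 (T : finType) (w : seq T) (r : T) :
  removable w r -> (inLOBST w <-> inLOBST (proj r w)).
Proof. by move=> [bb [H1 H2 H3 H4 H5]]; split; [exact: (fwd H3 H4 H5) | exact: (bwd H3)]. Qed.
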